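(* Consider the following game with $n$ players partitioned (unknown to the good players) into a set $G$ of $n-f$ good players and a set $B$ of $f=n/(3+\epsilon)$ bad players, for some small $\epsilon>0$, played for up to $T$ iterations. In iteration $t$: the adversary privately picks $\sigma(t)\in\{-1,1\}$; each good player $i\in G$ picks $X_i(t)\in\{-1,1\}$ uniformly at random, independently; the bad players see these values and then choose $X_i(t)\in\{-1,1\}$ for $i\in B$ arbitrarily; if $\mathrm{sgn}(\sum_{i\in[n]}X_i(t))=\sigma(t)$ the game continues to iteration $t+1$, otherwise it ends. Let $T=\tilde{\Theta}((n/\epsilon)^2)$. Then, with high probability, if the game does not end within $T$ iterations, the pair $(i,j)\in[n]^2$ with $i\neq j$ maximizing $\langle X_i,X_j\rangle=\sum_{t=1}^T X_i(t)X_j(t)$ satisfies $B\cap\{i,j\}\neq\emptyset$.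
   Context: $\mathrm{sgn}(x)=1$ if $x\ge 0$ and $-1$ if $x<0$. ''With high probability'' means with probability $1-n^{-\Omega(1)}$ (arbitrarily large polynomial). *)

(* Defs.v *)
From HB Require Import structures.
From mathcomp Require Import all_boot all_order all_algebra.
From mathcomp Require Import reals exp.
Set Implicit Arguments. Unset Strict Implicit. Unset Printing Implicit Defensive.
Import Order.TTheory GRing.Theory Num.Theory.
Local Open Scope ring_scope.

(* A round: one bit per player, [true] = +1, [false] = -1. *)
Definition row (n : nat) := {ffun 'I_n -> bool}.

Definition val (b : bool) : int := if b then 1 else -1.

(* Deterministic adaptive adversary (randomized ones are mixtures of these;
   moreover the adversary also sees the (irrelevant) fresh coins at the
   bad coordinates, which serve as private randomness).
   - [sig_s h]   : sigma(t) (true = +1), chosen from the past history h only;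
   - [bad_s h c] : the row of bad-player choices, chosen after seeing the
                   history h and the current coin row c (containing the
                   good players' values X_i(t)). *)
Record strategy (n : nat) := Strategy {
  sig_s : seq (row n) -> bool ;
  bad_s : seq (row n) -> row n -> row n }.

(* The coins: the good players' uniform independent bits, for T rounds. *)
Definition coins (n T : nat) := {ffun 'I_T -> row n}.

Definition coin (n T : nat) (w : coins n T) (k : nat) : row n :=
  if insub k is Some j then w j else [ffun => false].

Definition play_row (n : nat) (B : {set 'I_n}) (S : strategy n)
  (h : seq (row n)) (c : row n) : row n :=
  [ffun i => if i \in B then bad_s S h c i else c i].

Fixpoint hist (n T : nat) (B : {set 'I_n}) (S : strategy n) (w : coins n T)
  (k : nat) : seq (row n) :=
  match k with
  | 0 => [::]
  | k'.+1 => let h := hist B S w k' in rcons h (play_row B S h (coin w k'))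
  end.

(* sgn(sum_i X_i(t)) = sigma(t), with sgn(0) = 1. *)
Definition continues (n : nat) (x : row n) (s : bool) : bool :=
  ((0 <= \sum_i val (x i)) == s).

Definition survives (n T : nat) (B : {set 'I_n}) (S : strategy n)
  (w : coins n T) : bool :=
  [forall t : 'I_T,
     let h := hist B S w t in continues (play_row B S h (coin w t)) (sig_s S h)].

Definition ip (n : nat) (X : seq (row n)) (i j : 'I_n) : int :=
  \sum_(x <- X) val (x i) * val (x j).

Definition maximizing_pair (n : nat) (X : seq (row n)) (i j : 'I_n) : bool :=
  (i != j) && [forall k, forall l, (k != l) ==> (ip X k l <= ip X i j)].

Definition bad_event (n T : nat) (B : {set 'I_n}) (S : strategy n)
  (w : coins n T) : bool :=
  survives B S w &&
  [exists i, exists j,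
     [&& maximizing_pair (hist B S w T) i j, i \notin B & j \notin B]].

Definition prob (R : realType) (Om : finType) (E : pred Om) : R :=
  (#|E|%:R / #|Om|%:R).

(* Main.v *)
Require Import Defs.
From HB Require Import structures.
From mathcomp Require Import all_boot all_order all_algebra.
From mathcomp Require Import reals exp sequences.
From mathcomp Require Import ring lra zify.
Set Implicit Arguments. Unset Strict Implicit. Unset Printing Implicit Defensive.
Import Order.TTheory GRing.Theory Num.Theory.
Local Open Scope ring_scope.
Local Notation row := Defs.row.
Local Notation bval := Defs.val.



Section Gen.
Variable R : realType.
Variables (n : nat) (B : {set 'I_n}) (S : strategy n).

Definition ext T (w : coins n T) (c : row n) : coins n T.+1 :=
  [ffun j : 'I_T.+1 => if (j < T)%N then coin w j else c].
Definition restr T (w : coins n T.+1) : coins n T :=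
  [ffun j : 'I_T => w (widen_ord (leqnSn T) j)].

Lemma coin_ext T w c k : (k < T)%N -> coin (@ext T w c) k = coin w k.
Proof.
move=> kT; rewrite /coin.
case: insubP => [j _ jk|]; last by rewrite (ltn_trans kT).
by rewrite ffunE jk kT.
Qed.

Lemma coin_extT T w c : coin (@ext T w c) T = c.
Proof.
rewrite /coin; case: insubP => [j _ jk|]; last by rewrite ltnSn.
by rewrite ffunE jk ltnn.
Qed.

Lemma hist_ext T w c k : (k <= T)%N -> hist B S (@ext T w c) k = hist B S w k.
Proof.
elim: k => [//|k IH] kT /=.
by rewrite IH ?(ltnW kT) // coin_ext.
Qed.

Lemma sum_ext T (F : coins n T.+1 -> R) :
  \sum_(w : coins n T.+1) F w = \sum_(w : coins n T) \sum_(c : row n) F (ext w c).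
Proof.
rewrite pair_big /=.
rewrite (reindex (fun p : coins n T * row n => ext p.1 p.2)) //.
exists (fun w => (restr w, w ord_max)).
- move=> [w c] _ /=; congr pair.
    apply/ffunP => j; rewrite !ffunE /= ltn_ord.
    rewrite /coin; case: insubP => [j' _ jj|]; last by rewrite ltn_ord.
    by congr (w _); apply: val_inj.
  by rewrite ffunE /= ltnn.
- move=> w _ /=; apply/ffunP => j; rewrite ffunE.
  case: ifP => jT.
    rewrite /coin; case: insubP => [j' _ jj|]; last by rewrite jT.
    by rewrite ffunE; congr (w _); apply: val_inj.
  congr (w _); apply: val_inj => /=.
  by move: (ltn_ord j) jT; rewrite ltnS leq_eqVlt => /orP [/eqP|->].
Qed.

Lemma mgf_gen (phi : seq (row n) -> row n -> R) (b : R) :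
 (forall h, \sum_(c : row n) expR (phi h c) <= #|{:row n}|%:R * expR b) ->
 forall T, \sum_(w : coins n T) expR (\sum_(t < T) phi (hist B S w t) (coin w t))
   <= (#|{:row n}|%:R ^+ T) * expR (T%:R * b).
Proof.
move=> Hb; elim=> [|T IH].
  under eq_bigr do rewrite big_ord0 expR0.
  by rewrite sumr_const card_ffun card_ord expn0 mul0r expR0 !mulr1 expr0.
rewrite sum_ext.
apply: (le_trans (y := \sum_(w : coins n T)
   expR (\sum_(t < T) phi (hist B S w t) (coin w t)) * (#|{:row n}|%:R * expR b))).
  apply: ler_sum => w _.
  have -> : \sum_(c : row n) expR (\sum_(t < T.+1) phi (hist B S (ext w c) t) (coin (ext w c) t))
     = expR (\sum_(t < T) phi (hist B S w t) (coin w t)) *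
       \sum_(c : row n) expR (phi (hist B S w T) c).
    rewrite mulr_sumr; apply: eq_bigr => c _.
    rewrite big_ord_recr /= expRD hist_ext // coin_extT; congr (expR _ * _).
    apply: eq_bigr => t _ /=; rewrite hist_ext ?coin_ext //.
    exact: ltnW.
  by rewrite ler_wpM2l // expR_ge0.
rewrite -mulr_suml.
apply: (le_trans (ler_wpM2r _ IH)).
  by rewrite mulr_ge0 // expR_ge0.
rewrite exprS -nat1r mulrDl mul1r expRD; rewrite le_eqVlt; apply/orP; left; apply/eqP; ring.
Qed.
End Gen.



Section Real.
Variable R : realType.

Lemma inv_le (a y : R) : 0 < a -> 1 <= y * a -> a^-1 <= y.
Proof.
move=> a0 h; rewrite -[a^-1]mul1r ler_pdivrMr //.
Qed.

Lemma expRN_le (x : R) : 0 <= x -> expR (- x) <= 1 - x + x ^+ 2.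
Proof.
move=> x0; rewrite expRN.
apply: (le_trans (y := (1 + x)^-1)).
  rewrite lef_pV2 ?expR_ge1Dx // posrE ?expR_gt0 //; lra.
apply: inv_le; first lra.
have : 0 <= x ^+ 3 by rewrite exprn_ge0.
rewrite !exprS expr0; nra.
Qed.

Lemma expR_le (x : R) : 0 <= x <= 2^-1 -> expR x <= 1 + x + 2 * x ^+ 2.
Proof.
move=> /andP [x0 x1].
have -> : expR x = (expR (- x))^-1 by rewrite expRN invrK.
apply: inv_le; first exact: expR_gt0.
have h := expR_ge1Dx (- x).
have h2 : 0 <= x ^+ 2 * (1 - 2 * x) by rewrite mulr_ge0 ?sqr_ge0 //; lra.
have h3 : 0 <= 1 + x + 2 * x ^+ 2 by rewrite !exprS expr0; nra.
apply: (le_trans (y := (1 + x + 2 * x ^+ 2) * (1 - x))).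
  move: h2; rewrite !exprS expr0; nra.
by rewrite ler_wpM2l //; lra.
Qed.
End Real.



Section Rows.
Variable R : realType.
Variables (n : nat) (B : {set 'I_n}).

Definition vr (b : bool) : R := if b then 1 else -1.
Lemma vr_val b : (bval b)%:~R = vr b. Proof. by case: b. Qed.
Lemma vr2 b : vr b * vr b = 1. Proof. by case: b; rewrite /= ?mulrNN mulr1. Qed.

Definition flip (A : {set 'I_n}) (c : row n) : row n :=
  [ffun k => if k \in A then ~~ c k else c k].
Lemma flipK A : involutive (flip A).
Proof. move=> c; apply/ffunP => k; rewrite !ffunE. case: (k \in A) => //=. by case: (c k). Qed.

Lemma sum_flip A (F : row n -> R) : \sum_(c : row n) F c = \sum_(c : row n) F (flip A c).
Proof. exact: (reindex_inj (inv_inj (@flipK A))). Qed.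

Notation N := (#|{: row n}|%:R : R).

Lemma sum_vr2 i j : \sum_(c : row n) vr (c i) * vr (c j) = (i == j)%:R * N.
Proof.
case: eqP => [<-|/eqP ij].
  under eq_bigr do rewrite vr2.
  by rewrite sumr_const mul1r.
rewrite mul0r; apply/eqP; rewrite -[_ == 0](@mulrn_eq0 _ _ 2) //.
rewrite mulr2n {1}(sum_flip [set i]) -big_split /=; apply/eqP; apply: big1 => c _.
rewrite !ffunE !inE eqxx eq_sym (negbTE ij) /vr; case: (c i); case: (c j) => /=; lra.
Qed.
End Rows.



Section Step.
Variable R : realType.
Variables (n : nat) (B : {set 'I_n}).
Local Notation N := (#|{: row n}|%:R : R).
Local Notation m := (#|~: B|%:R : R).

Definition gR (c : row n) : R := \sum_(i in ~: B) vr R (c i).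

Lemma vrN b : vr R (~~ b) = - vr R b. Proof. by case: b; rewrite /= ?opprK. Qed.

Lemma gR_flip c : gR (flip (~: B) c) = - gR c.
Proof. by rewrite /gR -sumrN; apply: eq_bigr => i iB; rewrite ffunE iB vrN. Qed.

Lemma sum_g2 : \sum_(c : row n) gR c ^+ 2 = m * N.
Proof.
under eq_bigr do rewrite expr2 /gR mulr_suml.
under eq_bigr => c _ do under eq_bigr => i _ do rewrite mulr_sumr.
rewrite exchange_big /=.
under eq_bigr => i _ do rewrite exchange_big /=.
under eq_bigr => i _ do under eq_bigr => j _ do rewrite sum_vr2.
transitivity (\sum_(i in ~: B) N); last by rewrite sumr_const mulr_natl.
apply: eq_bigr => i iB.
rewrite (bigD1 i) //= eqxx mul1r big1 ?addr0 // => j /andP [_ ji].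
by rewrite eq_sym (negbTE ji) mul0r.
Qed.

Definition Y (s : bool) (c : row n) : R :=
  if s then (if gR c < 0 then gR c ^+ 2 else 0) else (if 0 <= gR c then gR c ^+ 2 else 0).

Lemma sumY s : \sum_(c : row n) Y s c = m * N / 2.
Proof.
have e1 : \sum_(c : row n) (if gR c < 0 then gR c ^+ 2 else 0) =
          \sum_(c : row n) (if 0 < gR c then gR c ^+ 2 else 0).
  rewrite (sum_flip (~: B)); apply: eq_bigr => c _.
  by rewrite gR_flip oppr_lt0 sqrrN.
have e2 : \sum_(c : row n) gR c ^+ 2 = \sum_(c : row n) (if gR c < 0 then gR c ^+ 2 else 0) +
          \sum_(c : row n) (if 0 < gR c then gR c ^+ 2 else 0).
  rewrite -big_split; apply: eq_bigr => c _ /=.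
  case: (ltrgt0P (gR c)) => [h|h|->]; rewrite /= ?add0r ?addr0 //.
  by rewrite expr0n.
have e3 : \sum_(c : row n) Y s c = \sum_(c : row n) (if 0 < gR c then gR c ^+ 2 else 0).
  case: s; first by rewrite -e1.
  apply: eq_bigr => c _ /=.
  case: (ltrgt0P (gR c)) => [h|h|->] //=; rewrite ?lexx ?ltxx ?expr0n //.
rewrite e3 -e1; rewrite -e1 sum_g2 in e2.
rewrite e2; lra.
Qed.

Lemma gR_bound c : - (n%:R) <= gR c <= n%:R.
Proof.
have hm : m <= n%:R by rewrite ler_nat; apply: (leq_trans (max_card _)); rewrite card_ord.
apply/andP; split.
  apply: (le_trans (y := \sum_(i in ~: B) (-1 : R))).
    by rewrite sumr_const mulNrn lerN2.
  by apply: ler_sum => i _; rewrite /vr; case: (c i) => //; lra.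
apply: (le_trans (y := \sum_(i in ~: B) (1 : R))).
  by apply: ler_sum => i _; rewrite /vr; case: (c i) => //; lra.
by rewrite sumr_const.
Qed.

Lemma Y_bound s c : 0 <= Y s c <= n%:R ^+ 2.
Proof.
have /andP [h1 h2] := gR_bound c.
have h3 : gR c ^+ 2 <= n%:R ^+ 2.
  have h4 : 0 <= (n%:R - gR c) * (n%:R + gR c) by apply: mulr_ge0; lra.
  move: h4; rewrite !expr2; lra.
rewrite /Y; case: s; [case: (gR c < 0) | case: (0 <= gR c)];
  rewrite /= ?mul1r ?mul0r ?lexx ?sqr_ge0 //; exact: (le_trans (sqr_ge0 _)).
Qed.

Lemma stepY (lam : R) s : 0 <= lam ->
  \sum_(c : row n) expR (- (lam * Y s c)) <=
  N * expR (- (lam * (m / 2)) + lam ^+ 2 * n%:R ^+ 4).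
Proof.
move=> l0.
apply: (le_trans (y := \sum_(c : row n) (1 - lam * Y s c + lam ^+ 2 * n%:R ^+ 4))).
  apply: ler_sum => c _.
  have /andP [y0 y1] := Y_bound s c.
  apply: (le_trans (expRN_le _)); first exact: mulr_ge0.
  rewrite lerD2l exprMn ler_wpM2l ?sqr_ge0 //.
  have -> : (n%:R : R) ^+ 4 = (n%:R ^+ 2) ^+ 2 by rewrite -exprM.
  by rewrite lerXn2r // nnegrE (le_trans y0).
have sK : \sum_(c : row n) (lam ^+ 2 * n%:R ^+ 4) = N * (lam ^+ 2 * n%:R ^+ 4).
  by rewrite sumr_const mulr_natl.
have s1 : \sum_(c : row n) (1 : R) = N by rewrite sumr_const.
rewrite !big_split sumrN -mulr_sumr sumY s1 sK.
apply: (le_trans (y := N * (1 + (- (lam * (m / 2)) + lam ^+ 2 * n%:R ^+ 4)))).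
  rewrite le_eqVlt; apply/orP; left; apply/eqP => /=; field.
  by [].
by apply: ler_wpM2l; [exact: ler0n | exact: expR_ge1Dx].
Qed.

Lemma stepZ (lam : R) i j : i != j -> 0 <= lam <= 2^-1 ->
  \sum_(c : row n) expR (lam * (vr R (c i) * vr R (c j))) <= N * expR (2 * lam ^+ 2).
Proof.
move=> ij /andP [l0 l1].
have e1 : \sum_(c : row n) expR (lam * (vr R (c i) * vr R (c j))) =
          \sum_(c : row n) expR (lam * - (vr R (c i) * vr R (c j))).
  rewrite (sum_flip [set i]); apply: eq_bigr => c _.
  rewrite !ffunE !inE eqxx eq_sym (negbTE ij) vrN; congr (expR _); ring.
have e2 : forall c : row n, expR (lam * (vr R (c i) * vr R (c j))) +
          expR (lam * - (vr R (c i) * vr R (c j))) = expR lam + expR (- lam).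
  move=> c; rewrite /vr; case: (c i); case: (c j);
  rewrite ?mulr1 ?mulrN1 ?mulN1r ?opprK ?mulrN ?mulNr ?opprK ?mulr1 //; exact: addrC.
have e3 : 2 * \sum_(c : row n) expR (lam * (vr R (c i) * vr R (c j))) =
          N * (expR lam + expR (- lam)).
  rewrite mulr_natl mulr2n {2}e1 -big_split /=.
  rewrite (eq_bigr (fun _ => expR lam + expR (- lam))); last by move=> c _; exact: e2.
  by rewrite sumr_const mulr_natl.
have h1 := expR_le (x := lam); have h2 := expRN_le l0.
have h3 : expR lam + expR (- lam) <= 2 * expR (2 * lam ^+ 2).
  apply: (le_trans (y := 2 * (1 + 2 * lam ^+ 2))); last first.
    by apply: ler_wpM2l => //; exact: expR_ge1Dx.
  have := h1 (introT andP (conj l0 l1)); move: h2.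
  have hl2 : 0 <= lam * lam by exact: mulr_ge0.
  rewrite !expr2; lra.
have hN : 0 <= N by exact: ler0n.
have : 2 * \sum_(c : row n) expR (lam * (vr R (c i) * vr R (c j))) <= 2 * (N * expR (2 * lam ^+ 2)).
  rewrite e3 mulrCA; exact: ler_wpM2l.
by rewrite ler_pM2l.
Qed.
End Step.



Section Game.
Variable R : realType.
Variables (n : nat) (B : {set 'I_n}) (S : strategy n).
Local Notation vr := (vr R).
Local Notation f := (#|B|%:R : R).

Definition ipR (X : seq (row n)) i j : R := \sum_(x <- X) vr (x i) * vr (x j).
Definition bR (x : row n) : R := \sum_(i in B) vr (x i).

Lemma ip_R X i j : (ip X i j)%:~R = ipR X i j.
Proof.
rewrite /ip /ipR; elim: X => [|x X IH]; first by rewrite !big_nil.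
by rewrite !big_cons intrD intrM !vr_val IH.
Qed.

Lemma big_hist T (w : coins n T) (F : row n -> R) k :
  \sum_(x <- hist B S w k) F x =
  \sum_(t < k) F (play_row B S (hist B S w t) (coin w t)).
Proof.
elim: k => [|k IH]; first by rewrite big_nil big_ord0.
by rewrite /= big_rcons /= IH big_ord_recr.
Qed.

Lemma size_hist T (w : coins n T) k : size (hist B S w k) = k.
Proof. by elim: k => [//|k IH] /=; rewrite size_rcons IH. Qed.

Lemma play_good h c i : i \notin B -> play_row B S h c i = c i.
Proof. by move=> iB; rewrite ffunE (negbTE iB). Qed.

Lemma tot_split h c :
  (\sum_i bval (play_row B S h c i))%:~R = bR (play_row B S h c) + gR R B c.
Proof.
rewrite (big_morph (fun z : int => z%:~R : R) (@intrD R) (erefl _)).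
rewrite (bigID (mem B)) /=; congr (_ + _).
  by apply: eq_bigr => i _; rewrite vr_val.
rewrite /gR; apply: eq_big => [i|i]; first by rewrite inE.
by move=> iB; rewrite vr_val play_good.
Qed.

Lemma round_Y h c s : continues (play_row B S h c) s ->
  Y R B s c <= bR (play_row B S h c) ^+ 2.
Proof.
rewrite /continues -(@ler0z R) tot_split.
set b := bR _; set g := gR R B c => /eqP <-.
rewrite /Y -/g; case: (lerP 0 (b + g)) => hbg.
  case: ifP => [gn|_]; last exact: sqr_ge0.
  have gn' : g < 0 by [].
  have : 0 <= (b - g) * (b + g) by apply: mulr_ge0 => //; lra.
  have -> : (b - g) * (b + g) = b ^+ 2 - g ^+ 2 by ring.
  lra.
case: ifP => [gp|_]; last exact: sqr_ge0.
have gp' : 0 <= g by [].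
have : 0 <= (b - g) * (b + g) by apply: mulr_le0 => //; lra.
have -> : (b - g) * (b + g) = b ^+ 2 - g ^+ 2 by ring.
lra.
Qed.

Lemma surv_Y T (w : coins n T) : survives B S w ->
  \sum_(t < T) Y R B (sig_s S (hist B S w t)) (coin w t) <=
  \sum_(x <- hist B S w T) bR x ^+ 2.
Proof.
move=> /forallP sv; rewrite big_hist; apply: ler_sum => t _.
exact: round_Y (sv t).
Qed.

Lemma ipR_diag X i : ipR X i i = (size X)%:R.
Proof.
rewrite /ipR; elim: X => [|x X IH]; first by rewrite big_nil.
by rewrite big_cons IH vr2 /= -nat1r.
Qed.

Lemma bad_sum X (A : R) : 0 <= A -> (forall k l, k != l -> ipR X k l <= A) ->
  \sum_(x <- X) bR x ^+ 2 <= f * ((size X)%:R + f * A).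
Proof.
move=> A0 hA.
have -> : \sum_(x <- X) bR x ^+ 2 = \sum_(i in B) \sum_(j in B) ipR X i j.
  rewrite /ipR; under eq_bigr do rewrite expr2 /bR mulr_suml.
  under eq_bigr => x _ do under eq_bigr => i _ do rewrite mulr_sumr.
  rewrite exchange_big /=; apply: eq_bigr => i _.
  by rewrite exchange_big.
apply: (le_trans (y := \sum_(i in B) ((size X)%:R + f * A))); last first.
  by rewrite sumr_const -(mulr_natl ((size X)%:R + f * A)).
apply: ler_sum => i iB.
rewrite (bigD1 i) //= ipR_diag lerD2l.
apply: (le_trans (y := \sum_(j in B | j != i) A)).
  by apply: ler_sum => j /andP [_ ji]; apply: hA; rewrite eq_sym.
have -> : f * A = \sum_(j in B) A by rewrite sumr_const; exact: mulr_natl.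
by rewrite [X in _ <= X](bigD1 i) //= -[X in X <= _]add0r lerD2r.
Qed.
End Game.



Lemma div_le (R : realType) (P a b : R) : 0 <= P -> 0 < a -> a <= b -> P / b <= P / a.
Proof.
move=> P0 a0 ab; apply: ler_wpM2l => //.
by rewrite lef_pV2 // posrE (lt_le_trans a0).
Qed.

Lemma div_le2 (R : realType) (a b d : R) : 0 < d -> a <= b -> a / d <= b / d.
Proof. by move=> d0 ab; rewrite ler_pM2r // invr_gt0. Qed.

Lemma one_le_expR (R : realType) (x : R) : 0 <= x -> 1 <= expR x.
Proof. move=> x0; have := expR_ge1Dx x; lra. Qed.

Lemma dsum_ge (R : realType) (I : finType) (F : I -> I -> R) i0 j0 :
  (forall i j, 0 <= F i j) -> F i0 j0 <= \sum_i \sum_j F i j.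
Proof.
move=> F0; rewrite (bigD1 i0) //= (bigD1 j0) //= -addrA -[X in X <= _]addr0.
rewrite lerD2l; apply: addr_ge0; apply: sumr_ge0 => *; first exact: F0.
by apply: sumr_ge0 => *; exact: F0.
Qed.

Unset Implicit Arguments.
Theorem lemma2 (R : realType) (c : nat) :
  exists (K : R) (k : nat) (eps0 : R) (n0 : nat),
    0 < K /\ 0 < eps0 /\
    forall (n : nat) (eps : R) (B : {set 'I_n}) (S : strategy n) (T : nat),
      (n0 <= n)%N ->
      0 < eps <= eps0 ->
      (3 + eps) * #|B|%:R = n%:R ->
      K * (n%:R / eps) ^+ 2 * (ln (n%:R / eps)) ^+ k <= T%:R <=
        K * (n%:R / eps) ^+ 2 * (ln (n%:R / eps)) ^+ k + 1 ->
      prob R (bad_event B S (T:=T)) <= (n%:R ^+ c)^-1.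
Proof.
exists (1024 * (c + 3)%:R), 1%N, 1, 4%N.
split; first by rewrite mulr_gt0 // ltr0n addn3.
split; first by [].
move=> n eps B S T n4 /andP [e0 e1] hB /andP [hT _].
rewrite expr1 in hT.
set f : R := #|B|%:R in hB.
set nr : R := n%:R in hB hT *.
set Tr : R := T%:R in hT.
have nr4 : 4 <= nr by rewrite /nr (ler_nat R 4 n).
have f0 : 0 <= f by exact: ler0n.
have f4 : nr <= 4 * f.
  have : 0 <= (1 - eps) * f by apply: mulr_ge0 => //; lra.
  rewrite mulrBl mul1r; rewrite mulrDl in hB; lra.
have f1 : 1 <= f by lra.
have fn : f <= nr.
  have : 0 <= eps * f by apply: mulr_ge0 => //; lra.
  rewrite mulrDl in hB; lra.
have hm : #|~: B|%:R = nr - f.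
  have := cardsC B; rewrite card_ord => /(congr1 (fun k => k%:R : R)).
  rewrite natrD -/f -/nr => <-; ring.
have nr0 : 0 < nr by lra.
have Tr0 : 0 <= Tr by exact: ler0n.
set A : R := eps * Tr / (4 * f).
set lam1 : R := eps / (16 * f).
set lam2 : R := eps * f / (8 * nr ^+ 4).
set Q : R := eps ^+ 2 * Tr / (1024 * nr ^+ 2).
have A0 : 0 <= A by rewrite /A divr_ge0 // ?mulr_ge0 //; lra.
have l10 : 0 <= lam1 by rewrite /lam1 divr_ge0 //; lra.
have l11 : lam1 <= 2^-1.
  rewrite /lam1 ler_pdivrMr; last lra.
  lra.
have l20 : 0 <= lam2 by rewrite /lam2 divr_ge0 ?mulr_ge0 ?exprn_ge0 //; lra.
set N : R := #|{: row n}|%:R.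
set b2 : R := - (lam2 * (#|~: B|%:R / 2)) + lam2 ^+ 2 * nr ^+ 4.
set F := fun w : coins n T =>
  expR (lam2 * (f * (Tr + f * A)) + \sum_(t < T) - (lam2 * Y R B (sig_s S (hist B S w t)) (coin w t)))
  + \sum_i \sum_j (if i != j then
      expR (- (lam1 * A) + \sum_(t < T) lam1 * (vr R (coin w t i) * vr R (coin w t j))) else 0).
have Fge0 : forall w, 0 <= F w.
  move=> w; apply: addr_ge0; first exact: expR_ge0.
  apply: sumr_ge0 => i _; apply: sumr_ge0 => j _; case: ifP => _ //; exact: expR_ge0.
have hpt : forall w, bad_event B S w -> 1 <= F w.
  move=> w /andP [sv /existsP [i0 /existsP [j0 /and3P [mp gi gj]]]].
  move: mp => /andP [ij /forallP mx].
  set X := hist B S w T.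
  have hG : ipR R X i0 j0 = \sum_(t < T) vr R (coin w t i0) * vr R (coin w t j0).
    by rewrite /ipR /X big_hist; apply: eq_bigr => t _; rewrite !play_good.
  have dge : 0 <= \sum_i \sum_j (if i != j then
      expR (- (lam1 * A) + \sum_(t < T) lam1 * (vr R (coin w t i) * vr R (coin w t j))) else 0).
    apply: sumr_ge0 => i _; apply: sumr_ge0 => j _; case: ifP => _ //; exact: expR_ge0.
  case: (lerP A (ipR R X i0 j0)) => hA.
    rewrite /F -[X in X <= _]add0r; apply: lerD; first exact: expR_ge0.
    rewrite (bigD1 i0) //= (bigD1 j0) //= ij -addrA -[X in X <= _]addr0.
    apply: lerD; last first.
      apply: addr_ge0; apply: sumr_ge0 => i _; first by case: ifP => _ //; exact: expR_ge0.
      by apply: sumr_ge0 => j _; case: ifP => _ //; exact: expR_ge0.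
    apply: one_le_expR; rewrite -mulr_sumr -hG.
    have := ler_wpM2l l10 hA; lra.
  have hall : forall k l, k != l -> ipR R X k l <= A.
    move=> k l kl; have := mx k; move/forallP/(_ l); rewrite kl /= -(ler_int R) !ip_R => h.
    by apply: le_trans h _; exact: ltW.
  have hb := @bad_sum R n B X A A0 hall; rewrite size_hist in hb.
  have hs := @surv_Y R n B S T w sv.
  rewrite /F; apply: (le_trans (y := expR (lam2 * (f * (Tr + f * A)) +
     \sum_(t < T) - (lam2 * Y R B (sig_s S (hist B S w t)) (coin w t))))); last first.
    by rewrite lerDl.
  apply: one_le_expR; rewrite sumrN -mulr_sumr.
  have := ler_wpM2l l20 (le_trans hs hb); lra.
have fne : f != 0 by rewrite gt_eqF //; lra.
have nrne : nr != 0 by rewrite gt_eqF.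
have hE2 : - (lam1 * A) + Tr * (2 * lam1 ^+ 2) <= - Q.
  have -> : - (lam1 * A) + Tr * (2 * lam1 ^+ 2) = - (eps ^+ 2 * Tr / (128 * f ^+ 2)).
    by rewrite /lam1 /A; field.
  rewrite lerN2 /Q; apply: div_le.
  - by rewrite mulr_ge0 // sqr_ge0.
  - by apply: mulr_gt0; [lra | apply: exprn_gt0; lra].
  have : f * f <= nr * nr by apply: ler_pM.
  have : 0 <= nr * nr by apply: mulr_ge0; lra.
  rewrite !expr2; lra.
have hm' : #|~: B|%:R = (2 + eps) * f by rewrite hm -hB; ring.
have hE1 : lam2 * (f * (Tr + f * A)) + Tr * b2 <= - Q.
  have -> : lam2 * (f * (Tr + f * A)) + Tr * b2 =
            - (eps ^+ 2 * Tr * (16 * f ^+ 2) / (1024 * nr ^+ 4)).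
    by rewrite /b2 hm' /lam2 /A; field; do ?[apply/andP; split]; assumption.
  have -> : Q = eps ^+ 2 * Tr * nr ^+ 2 / (1024 * nr ^+ 4).
    by rewrite /Q; field; do ?[apply/andP; split]; assumption.
  rewrite lerN2; apply: div_le2; first by rewrite mulr_gt0 // exprn_gt0.
  apply: ler_wpM2l; first by rewrite mulr_ge0 // sqr_ge0.
  have : nr * nr <= (4 * f) * (4 * f) by apply: ler_pM => //; lra.
  have -> : (4 * f) * (4 * f) = 16 * (f * f) by ring.
  rewrite !expr2; lra.
have hQ : (c + 3)%:R * ln nr <= Q.
  apply: (le_trans (y := (c + 3)%:R * ln (nr / eps))).
    apply: ler_wpM2l => //; rewrite ler_ln ?posrE //; last by rewrite divr_gt0.
    rewrite ler_pdivlMr //; have := ler_wpM2l (ltW nr0) e1; lra.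
  have -> : (c + 3)%:R * ln (nr / eps) =
     eps ^+ 2 * (1024 * (c + 3)%:R * (nr / eps) ^+ 2 * ln (nr / eps)) / (1024 * nr ^+ 2).
    by field; do ?[apply/andP; split]; rewrite ?gt_eqF //; assumption.
  rewrite /Q; apply: div_le2; first by rewrite mulr_gt0 // exprn_gt0.
  by apply: ler_wpM2l => //; exact: sqr_ge0.
have hEQ : expR (- Q) <= (nr ^+ (c + 3))^-1.
  apply: (le_trans (y := expR (- ((c + 3)%:R * ln nr)))).
    by rewrite ler_expR lerN2.
  by rewrite expRN expRM_natl lnK // posrE.
have NT0 : 0 < N ^+ T.
  apply: exprn_gt0; rewrite /N ltr0n; apply/card_gt0P; by exists [ffun => false].
have hcard : (#|bad_event B S (T:=T)|%:R : R) <= \sum_(w : coins n T) F w.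
  have -> : (#|bad_event B S (T:=T)|%:R : R) = \sum_(w in bad_event B S (T:=T)) 1.
    by rewrite sumr_const.
  rewrite big_mkcond /=; apply: ler_sum => w _; case: ifP => hw; last exact: Fge0.
  by apply: hpt.
have hs1 : \sum_(w : coins n T) expR (lam2 * (f * (Tr + f * A)) +
     \sum_(t < T) - (lam2 * Y R B (sig_s S (hist B S w t)) (coin w t))) <= N ^+ T * expR (- Q).
  under eq_bigr do rewrite expRD.
  rewrite -mulr_sumr.
  have hmg := @mgf_gen R n B S (fun h c => - (lam2 * Y R B (sig_s S h) c)) b2 _ T.
  apply: (le_trans (ler_wpM2l (expR_ge0 _) (hmg _))).
    by move=> h; exact: stepY.
  rewrite mulrCA -expRD; apply: ler_wpM2l; first exact: ltW.
  by rewrite ler_expR.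
have hs2 : forall i j : 'I_n, \sum_(w : coins n T) (if i != j then
      expR (- (lam1 * A) + \sum_(t < T) lam1 * (vr R (coin w t i) * vr R (coin w t j))) else 0)
      <= N ^+ T * expR (- Q).
  move=> i j; case: (boolP (i != j)) => ij; last first.
    by rewrite big1 // mulr_ge0 ?expR_ge0 // ltW.
  under eq_bigr do rewrite expRD.
  rewrite -mulr_sumr.
  have hmg := @mgf_gen R n B S (fun h c => lam1 * (vr R (c i) * vr R (c j))) (2 * lam1 ^+ 2) _ T.
  apply: (le_trans (ler_wpM2l (expR_ge0 _) (hmg _))).
    by move=> h; apply: stepZ => //; apply/andP.
  rewrite mulrCA -expRD; apply: ler_wpM2l; first exact: ltW.
  by rewrite ler_expR.
have hsum : \sum_(w : coins n T) F w <= N ^+ T * expR (- Q) * (1 + nr ^+ 2).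
  rewrite /F big_split /=.
  rewrite [X in _ <= X]mulrDr mulr1; apply: lerD; first exact: hs1.
  rewrite exchange_big /=.
  apply: (le_trans (y := \sum_(i : 'I_n) \sum_(j : 'I_n) (N ^+ T * expR (- Q)))).
    apply: ler_sum => i _; rewrite exchange_big /=; apply: ler_sum => j _; exact: hs2.
  rewrite !sumr_const card_ord -mulrnA -mulr_natr natrM -expr2; exact: lexx.
rewrite /prob card_ffun card_ord natrX -/N ler_pdivrMr //.
apply: (le_trans hcard); apply: (le_trans hsum).
rewrite -mulrA mulrC; apply: ler_wpM2r; first exact: ltW.
apply: (le_trans (y := (nr ^+ (c + 3))^-1 * (1 + nr ^+ 2))).
  by apply: ler_wpM2r => //; apply: addr_ge0 => //; exact: sqr_ge0.
rewrite exprD invfM -mulrA -[X in _ <= X]mulr1; apply: ler_wpM2l.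
  by rewrite invr_ge0 exprn_ge0 // ltW.
rewrite mulrC ler_pdivrMr ?exprn_gt0 // mul1r.
have h16 : 16 <= nr * nr.
  apply: (le_trans (y := 4 * nr)); first lra.
  by apply: ler_wpM2r => //; lra.
have : 4 * (nr * nr) <= nr * (nr * nr) by apply: ler_wpM2r => //; lra.
rewrite !exprS expr0 !mulr1; lra.
Qed.
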